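(* Let $f_0(i)=i$ for all $i\ge1$. Then for every $m\ge1$ and $1\le k\le n$, $c_m(n,k)$ equals the number of words of length $n-1$ over the alphabet $\{0,1,\ldots,m+1\}$ having exactly $k-1$ letters equal to $m+1$ and avoiding $01$ (no letter $0$ is immediately followed by the letter $1$).
   Context: For $m\ge 1$, $f_m$ is the invert transform of $f_{m-1}$, i.e. $f_m(n)=f_{m-1}(n)+\sum_{i=1}^{n-1}f_{m-1}(i)f_m(n-i)$ for $n\ge1$. For $m\ge1$ the numbers $c_m(n,k)$, $0\le k\le n$, are defined by $c_m(0,0)=1$, $c_m(n,0)=0$ for $n\ge1$, and $c_m(n,k)=\sum_{i=1}^{n-k+1}f_{m-1}(i)\,c_m(n-i,k-1)$ for $1\le k\le n$. Words may be empty. *)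

(* Defs.v *)
From mathcomp Require Import all_boot.
Set Implicit Arguments. Unset Strict Implicit. Unset Printing Implicit Defensive.

Definition is_f_family (f : nat -> nat -> nat) : Prop :=
  (forall i, 1 <= i -> f 0 i = i) /\
  (forall m n, 1 <= m -> 1 <= n ->
     f m n = f m.-1 n + \sum_(1 <= i < n) f m.-1 i * f m (n - i)).

Definition is_c_family (f : nat -> nat -> nat) (c : nat -> nat -> nat -> nat) : Prop :=
  forall m, 1 <= m ->
    c m 0 0 = 1 /\
    (forall n, 1 <= n -> c m n 0 = 0) /\
    (forall n k, 1 <= k <= n ->
       c m n k = \sum_(1 <= i < (n - k + 1).+1) f m.-1 i * c m (n - i) k.-1).

Definition avoids01 (s : seq nat) : bool := ~~ infix [:: 0; 1] s.

(* Main.v *)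
Require Import Defs.
From mathcomp Require Import all_boot.
From mathcomp Require Import zify.
From Stdlib Require Import Lia.
Set Implicit Arguments. Unset Strict Implicit.

Fixpoint cntQ (A L : nat) (Q : seq nat -> bool) : nat :=
  if L is L'.+1 then \sum_(x < A) cntQ A L' (fun s => Q (nat_of_ord x :: s)) else Q [::].

Lemma card_cntQ A L (Q : seq nat -> bool) :
  #|[set w : L.-tuple 'I_A | Q (map val w)]| = cntQ A L Q.
Proof.
rewrite -sum1dep_card big_mkcond /=.
elim: L Q => [|L IH] Q /=.
  rewrite (big_pred1 [tuple]) /=; first by case: (Q [::]).
  by move=> w; rewrite /= tuple0; apply/esym/eqP; apply: val_inj.
pose h := fun p : 'I_A * L.-tuple 'I_A => [tuple of p.1 :: p.2].
have hb : bijective h.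
  exists (fun w : L.+1.-tuple 'I_A => (thead w, [tuple of behead w])).
    by case=> x t; rewrite /h /=; congr pair; apply: val_inj.
  move=> w; rewrite /h /=; apply: val_inj => /=.
  by case: w => [[|y s] //=].
rewrite (reindex h); last by apply: onW_bij.
rewrite -(pair_big xpredT xpredT (fun x t => if Q (map val (h (x, t))) then 1 else 0)) /=.
apply: eq_bigr => x _; rewrite -IH; apply: eq_bigr => t _ //.
Qed.


Lemma cntQ_ext A L Q Q' : Q =1 Q' -> cntQ A L Q = cntQ A L Q'.
Proof.
elim: L Q Q' => [|L IH] Q Q' e /=; first by rewrite e.
by apply: eq_bigr => x _; apply: IH => s.
Qed.

Lemma cntQ0 A L : cntQ A L (fun _ => false) = 0.
Proof.
by elim: L => [|L IH] //=; rewrite big1.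
Qed.

Definition PN t z j (s : seq nat) :=
  (count_mem t s == j) && avoids01 (if z then 0 :: s else s).
Definition NN A t z j L := cntQ A L (PN t z j).

Lemma av_cons z x s : avoids01 (if z then [:: 0, x & s] else x :: s) =
  ~~ (z && (x == 1)) && avoids01 (if x == 0 then 0 :: s else s).
Proof.
by case: z; case: x => [|[|x]]; rewrite /avoids01 /= ?prefix0s.
Qed.

Lemma NN_step A t z j L x : 2 <= t ->
  cntQ A L (fun s => PN t z j (x :: s)) =
  if z && (x == 1) then 0 else
  if x == t then (if j is j'.+1 then NN A t (x == 0) j' L else 0)
  else NN A t (x == 0) j L.
Proof.
move=> t2; rewrite /NN.
case: ifP => [h|h].
  rewrite -[RHS](cntQ0 A L); apply: cntQ_ext => s.
  by rewrite /PN av_cons h andbF.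
case: ifP => [/eqP xt|xt].
  case: j => [|j].
    rewrite -[RHS](cntQ0 A L); apply: cntQ_ext => s.
    by rewrite /PN /= xt eqxx.
  apply: cntQ_ext => s.
  have x0 : (x == 0) = false by rewrite xt; case: t t2 {xt h} => [|[|]].
  by rewrite /PN av_cons h /= xt eqxx add1n eqSS.
apply: cntQ_ext => s.
by rewrite /PN av_cons h /= xt add0n.
Qed.

Lemma NN_rec a z j L : 1 <= a ->
  NN a.+2 a.+1 z j L.+1 =
  NN a.+2 a.+1 true j L + (if z then 0 else NN a.+2 a.+1 false j L)
  + (a - 1) * NN a.+2 a.+1 false j L
  + (if j is j'.+1 then NN a.+2 a.+1 false j' L else 0).
Proof.
move=> a1.
rewrite {1}/NN /=.
under eq_bigr => x _ do rewrite NN_step //.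
rewrite -(big_mkord (fun _ => true) (fun x => if z && (x == 1) then 0 else
  if x == a.+1 then (if j is j'.+1 then NN a.+2 a.+1 (x == 0) j' L else 0)
  else NN a.+2 a.+1 (x == 0) j L)) /=.
rewrite big_nat_recr //= big_ltn // big_ltn; last by case: a a1.
rewrite /= eqxx.
have -> : \sum_(2 <= i < a.+1) (if z && (i == 1) then 0 else
     if i == a.+1 then (if j is j'.+1 then NN a.+2 a.+1 (i == 0) j' L else 0)
     else NN a.+2 a.+1 (i == 0) j L) = \sum_(2 <= i < a.+1) NN a.+2 a.+1 false j L.
  apply: eq_big_nat => i /andP [i2 ia].
  have -> : (i == 1) = false by case: i i2 {ia} => [|[|]].
  have -> : (i == 0) = false by case: i i2 {ia} => [|[|]].
  by rewrite andbF (ltn_eqF ia).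
rewrite sum_nat_const_nat.
have -> : (a.+1 == 0) = false by [].
case: z => /=; rewrite ?andbT ?andbF /=.
all: case: a a1 => [|a] //= _; rewrite ?subn1 /=.
all: have e10 : (1 == 0) = false by [].
all: rewrite ?e10 eqxx !subSS !subn0 /=; lia.
Qed.



Definition recP a (h e : nat -> nat) :=
  [/\ h 0 = e 0, h 1 = a.+1 * h 0 + e 1 &
      forall L, h L.+2 + h L = a.+1 * h L.+1 + e L.+2].

Lemma recP_uniq a h h' e : recP a h e -> recP a h' e -> forall L, h L = h' L.
Proof.
case=> h0 h1 hr [h0' h1' hr'].
suff H : forall L, h L = h' L /\ h L.+1 = h' L.+1 by move=> L; case: (H L).
elim=> [|L [IH1 IH2]]; first by rewrite h1 h1' h0 h0'.
split=> //; have := hr L; rewrite IH1 IH2 -hr' => /eqP.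
by rewrite eqn_add2r => /eqP.
Qed.

Definition conv (g e : nat -> nat) L := \sum_(i < L.+1) g i * e (L - i).

Lemma conv_rec a g e : recP a g (fun L => (L == 0 : nat)) -> recP a (conv g e) e.
Proof.
case=> g0 g1 gr; rewrite /= in g0 g1.
rewrite g0 in g1.
split.
- by rewrite /conv big_ord_recl big_ord0 g0 /= subn0 mul1n addn0.
- rewrite /conv !big_ord_recl !big_ord0 /= g0 g1 /bump /= !subn0 subnn. lia.
have gr2 : forall L, g L.+2 + g L = a.+1 * g L.+1 by move=> L; rewrite gr /= addn0.
move=> L.
have E1 : conv g e L.+2 = g 0 * e L.+2 + g 1 * e L.+1 +
     \sum_(i < L.+1) g i.+2 * e (L - i).
  by rewrite /conv !big_ord_recl /= addnA.
have E2 : conv g e L.+1 = g 0 * e L.+1 + \sum_(i < L.+1) g i.+1 * e (L - i).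
  by rewrite /conv !big_ord_recl /=.
have E3 : \sum_(i < L.+1) g i.+2 * e (L - i) + conv g e L =
          a.+1 * \sum_(i < L.+1) g i.+1 * e (L - i).
  rewrite /conv -big_split big_distrr /=; apply: eq_bigr => i _.
  by rewrite -mulnDl gr2 mulnA.
rewrite E1 E2 g0 g1 -addnA E3 /=; lia.
Qed.

Lemma recP_conv a g h e : recP a g (fun L => (L == 0 : nat)) -> recP a h e ->
  forall L, h L = conv g e L.
Proof. by move=> Hg Hh; apply: recP_uniq Hh (conv_rec _ Hg). Qed.

Section Num.
Variable a : nat.
Hypothesis a1 : 1 <= a.

Definition N L j := NN a.+2 a.+1 false j L.
Definition G L := N L 0.

Lemma NT0 z j : NN a.+2 a.+1 z j 0 = (j == 0).
Proof. by case: z; rewrite /NN /PN /= /avoids01 /= andbT eq_sym. Qed.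

Lemma N0 j : N 0 j = (j == 0).
Proof. by rewrite /N /NN /PN /= /avoids01 /= andbT eq_sym. Qed.

Lemma Nstep L j : N L.+1 j = NN a.+2 a.+1 true j L.+1 + N L j.
Proof. rewrite /N !NN_rec //; lia. Qed.

Lemma N1 j : N 1 j = (j == 1) + a.+1 * (j == 0).
Proof.
rewrite /N NN_rec // !NT0.
case: j => [|[|j]] /=; rewrite ?NT0 /=; lia.
Qed.

Lemma Nrec L j : N L.+2 j + N L j =
  a.+1 * N L.+1 j + (if j is j'.+1 then N L.+1 j' else 0).
Proof.
have := Nstep L j; rewrite /N (@NN_rec a false j L.+1 a1) /=.
case: j => [|j] /=; move: a1; case: a => [//|a'] _; rewrite subn1 /= !mulSn; lia.
Qed.

Lemma G_rec : recP a G (fun L => (L == 0 : nat)).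
Proof.
split.
- by rewrite /G N0.
- by rewrite /G N1 N0 /=; lia.
by move=> L; rewrite /G Nrec /= addn0.
Qed.

Lemma Nconv L j : N L j.+1 = \sum_(i < L) G i * N (L.-1 - i) j.
Proof.
have H : recP a (fun L => N L j.+1) (fun L => if L is L'.+1 then N L' j else 0).
  split.
  - by rewrite N0.
  - by rewrite N1 N0 /=; case: j => [|j]; rewrite /= ?N0 /= ?muln0.
  by move=> L'; rewrite Nrec.
rewrite (recP_conv G_rec H L) /conv big_ord_recr /= subnn muln0 addn0.
apply: eq_bigr => i _.
case: L i => [|L] i /=; first by case: i.
have -> : L.+1 - i = (L - i).+1 by rewrite subSn // -ltnS.
by [].
Qed.

Lemma Nzero j L : L < j -> N L j = 0.
Proof.
elim: j L => [|j IH] L //= Lj.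
rewrite Nconv big1 // => i _.
rewrite IH ?muln0 //.
case: L Lj i => [|L] Lj i; first by case: i.
have := ltn_ord i; lia.
Qed.

End Num.

Lemma G1 L : G 1 L = L.+1.
Proof.
have H : recP 1 (fun L => L.+1) (fun L => (L == 0 : nat)).
  by split=> //= L0; lia.
by rewrite (recP_uniq (G_rec (isT : 1 <= 1)) H).
Qed.

Lemma Gshift a L : 1 <= a ->
  G a.+1 L = G a L + \sum_(i < L) G a i * G a.+1 (L.-1 - i).
Proof.
move=> a1.
have H : recP a (G a.+1) (fun L => (L == 0 : nat) + (if L is L'.+1 then G a.+1 L' else 0)).
  split.
  - by rewrite /G N0.
  - by rewrite /G N1 // N0 //=; lia.
  move=> L'; rewrite /G Nrec //= -/(G a.+1 L'.+1); lia.
rewrite (recP_conv (G_rec a1) H L) /conv big_ord_recr /= subnn muln1 addnC.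
congr (_ + _); apply: eq_bigr => i _.
case: L i => [|L] i /=; first by case: i.
have -> : L.+1 - i = (L - i).+1 by rewrite subSn // -ltnS.
by [].
Qed.

Lemma f_G f : is_f_family f -> forall m n, 1 <= n -> f m n = G m.+1 n.-1.
Proof.
case=> f0 fS; elim=> [|m IHm] n n1.
  by rewrite f0 // G1; case: n n1.
elim/ltn_ind: n n1 => n IHn n1.
rewrite fS //= IHm //.
case: n n1 IHn => [//|n'] _ IHn /=.
rewrite (Gshift n' (isT : 1 <= m.+1)).
congr (_ + _).
rewrite big_add1 /= big_mkord; apply: eq_bigr => i _.
rewrite IHm // IHn //; last by rewrite subSS; have := ltn_ord i; lia.
  rewrite subSS /=; congr (_ * G _ _); have := ltn_ord i; lia.
have := ltn_ord i; lia.
Qed.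

Lemma c_N f c : is_f_family f -> is_c_family f c -> forall m, 1 <= m ->
  forall n k, 1 <= k <= n -> c m n k = N m n.-1 k.-1.
Proof.
move=> Hf Hc m m1.
have [c00 [cn0 cS]] := Hc m m1.
have fG : forall i, 1 <= i -> f m.-1 i = G m i.-1.
  by move=> i i1; rewrite (f_G Hf) // prednK.
elim/ltn_ind=> n IHn k /andP [k1 kn].
rewrite cS ?k1 //.
case: k k1 kn => [//|[|k']] _ kn.
- rewrite subn1 addn1 prednK // big_nat_recr //= subnn c00 muln1 fG // big1_seq ?add0n //.
  move=> i /andP [_]; rewrite mem_index_iota => /andP [i1 iN].
  by rewrite cn0 ?muln0 // subn_gt0.
- case: n IHn kn => [//|n'] IHn kn /=.
  have -> : n'.+1 - k'.+2 + 1 = n' - k' by lia.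
  rewrite big_add1 /= Nconv // -(big_mkord (fun _ => true) (fun i => G m i * N m (n'.-1 - i) k')).
  rewrite [RHS](big_cat_nat _ (n:=n'-k')) ?leq_subr //= [X in _ = _ + X]big1_seq ?addn0.
    apply: eq_big_nat => i /andP [_ ik].
    rewrite fG // IHn //; last by apply/andP; split=> //; lia.
      rewrite /= subSS; congr (_ * N _ _ _); lia.
    lia.
  move=> i /andP [_]; rewrite mem_index_iota => /andP [i1 iN].
  rewrite Nzero ?muln0 //; lia.
Qed.

Theorem corollary25 (f : nat -> nat -> nat) (c : nat -> nat -> nat -> nat) :
  is_f_family f -> is_c_family f c ->
  forall m n k, 1 <= m -> 1 <= k <= n ->
    c m n k =
    #|[set w : n.-1.-tuple 'I_m.+2 |
        (count (fun x : 'I_m.+2 => val x == m.+1) w == k.-1)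
        && avoids01 (map val w)]|.
Proof.
move=> Hf Hc m n k m1 kn.
rewrite (c_N Hf Hc m1 kn).
have -> : [set w : n.-1.-tuple 'I_m.+2 |
        (count (fun x : 'I_m.+2 => val x == m.+1) w == k.-1)
        && avoids01 (map val w)] =
    [set w : n.-1.-tuple 'I_m.+2 | PN m.+1 false k.-1 (map val w)].
  by apply/setP => w; rewrite !inE /PN count_map.
by rewrite card_cntQ.
Qed.
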